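(* Let $m\le n$ be positive integers and $\eta\in[0,1]$, $\zeta,\Delta,\alpha$ reals with $\Delta>0$ and $\alpha\ge 2\Delta+\zeta$. Let $\mathbf{A}'$ be an $(\eta,n(1-\zeta))$-block source over $\mathbb{F}_2^{m\times n}$ and $\mathbf{x}$ a random variable over $\mathbb{F}_2^n$ independent of $\mathbf{A}'$ with $H_\infty(\mathbf{x})\ge\alpha n$. Then there exists $T\subseteq[m]$ with $|T|\ge(1-\eta)m$ such that $(\mathbf{A}'\mathbf{x})_T$ (the coordinates of $\mathbf{A}'\mathbf{x}\in\mathbb{F}_2^m$ indexed by $T$) is within statistical distance $|T|\cdot 2^{-\Delta n}$ of the uniform distribution on $\mathbb{F}_2^{|T|}$.
   Context: $H_\infty(X)=-\log_2\max_x\Pr[X=x]$. For a matrix $A$, $A_i$ is its $i$-th row and $A_{[i]}$ its first $i$ rows. A random variable $\mathbf{A}'$ over $\mathbb{F}_2^{m\times n}$ is an $(\eta,n')$-block source if there exists $S\subseteq[m]$ with $|S|\le\eta m$ such that for every $A\in\mathrm{supp}(\mathbf{A}')$ and every $i\notin S$, $H_\infty(\mathbf{A}'_i\mid\mathbf{A}'_{[i-1]}=A_{[i-1]})\ge n'$. *)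

(* Defs.v *)
From HB Require Import structures.
From mathcomp Require Import all_boot all_algebra.
From Stdlib Require Import Reals.

Set Implicit Arguments.
Unset Strict Implicit.
Unset Printing Implicit Defensive.

Local Open Scope R_scope.

Notation F2 := 'F_2.

Definition Rsum (T : finType) (f : T -> R) : R := \big[Rplus/0]_(t : T) f t.

Definition Rmaxf (T : finType) (f : T -> R) : R := \big[Rmax/0]_(t : T) f t.

Definition is_distr (T : finType) (p : T -> R) : Prop :=
  (forall t, 0 <= p t) /\ Rsum p = 1.

Definition log2 (x : R) : R := ln x / ln 2.

Definition H_inf (T : finType) (p : T -> R) : R := - log2 (Rmaxf p).

(* B_[i-1] = A_[i-1] : the rows strictly before (0-indexed) row i agree *)
Definition prefix_eq (m n : nat) (i : 'I_m) (B A : 'M[F2]_(m, n)) : bool :=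
  [forall j : 'I_m, ltn j i ==> (row j B == row j A)].

Definition cond_row (m n : nat) (pA : 'M[F2]_(m, n) -> R) (A : 'M[F2]_(m, n))
    (i : 'I_m) : 'rV[F2]_n -> R :=
  fun r =>
    Rsum (fun B => if prefix_eq i B A && (row i B == r) then pA B else 0)
    / Rsum (fun B => if prefix_eq i B A then pA B else 0).

Definition block_source (m n : nat) (pA : 'M[F2]_(m, n) -> R) (eta n' : R) : Prop :=
  exists S : {set 'I_m},
    INR #|S| <= eta * INR m /\
    forall A : 'M[F2]_(m, n), 0 < pA A ->
      forall i : 'I_m, i \notin S -> n' <= H_inf (cond_row pA A i).

(* the coordinates of v indexed by T (in increasing order) *)
Definition proj_T (m : nat) (T : {set 'I_m}) (v : 'cV[F2]_m) : 'cV[F2]_#|T| :=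
  \col_(j < #|T|) v (enum_val j) ord0.

Definition dist_AxT (m n : nat) (pA : 'M[F2]_(m, n) -> R) (px : 'cV[F2]_n -> R)
    (T : {set 'I_m}) : 'cV[F2]_#|T| -> R :=
  fun v => Rsum (fun A => Rsum (fun x =>
    if proj_T T (mulmx A x) == v then pA A * px x else 0)).

Definition uniform (T : finType) : T -> R := fun _ => / INR #|T|.

Definition stat_dist (T : finType) (p q : T -> R) : R :=
  / 2 * Rsum (fun t => Rabs (p t - q t)).

Arguments dist_AxT {m n} pA px T _.
Arguments proj_T {m} T v.
Arguments cond_row {m n} pA A i _.

(* Main.v *)
Require Import Defs.
From HB Require Import structures.
From mathcomp Require Import all_boot all_algebra.
From Stdlib Require Import Reals Lra Classical.
From mathcomp Require Import Rstruct.
Local Open Scope R_scope.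

Lemma F2cases (a : F2) : a = GRing.zero \/ a = GRing.one _.
Proof. case: a => [[|[|k]]] //= H; [left|right]; apply/val_inj => //. Qed.

Section RH.
Variable T : finType.
Implicit Types f g : T -> R.
Lemma Rsum_le f g : (forall t, f t <= g t) -> Rsum f <= Rsum g.
Proof. move=> H; rewrite /Rsum; apply: big_ind2 => //; [lra| move=> *; lra]. Qed.
Lemma Rsum_ge0 f : (forall t, 0 <= f t) -> 0 <= Rsum f.
Proof. move=> H; rewrite /Rsum; apply: big_ind => //; [lra| move=> *; lra]. Qed.
Lemma Rsum_abs f : Rabs (Rsum f) <= Rsum (fun t => Rabs (f t)).
Proof.
rewrite /Rsum; apply: (big_ind2 (fun a b => Rabs a <= b)).
- rewrite Rabs_R0; lra.
- move=> a b c d H1 H2; apply: Rle_trans (Rabs_triang _ _) _; lra.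
- by move=> *; lra.
Qed.
Lemma Rsum_add f g : Rsum (fun t => f t + g t) = Rsum f + Rsum g.
Proof. by rewrite /Rsum big_split. Qed.
Lemma Rsum_scal c f : Rsum (fun t => c * f t) = c * Rsum f.
Proof. by rewrite /Rsum big_distrr. Qed.
Lemma Rsum_ext f g : (forall t, f t = g t) -> Rsum f = Rsum g.
Proof. by move=> H; rewrite /Rsum; apply: eq_bigr. Qed.
Lemma Rsum_const c : Rsum (fun _ : T => c) = INR #|T| * c.
Proof.
rewrite /Rsum big_const cardE; elim: (enum T) => [|x s IH] /=; first lra.
rewrite IH; case: (size s) => [|z] /=; lra.
Qed.
Lemma Rsum_pred1 (a : T) (F : T -> R) : Rsum (fun t => if t == a then F t else 0) = F a.
Proof. by rewrite /Rsum -big_mkcond big_pred1_eq. Qed.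
Lemma Rsum_pred1' (a : T) (F : T -> R) : Rsum (fun t => if a == t then F t else 0) = F a.
Proof. rewrite -(Rsum_pred1 a F); apply: Rsum_ext => t; by rewrite eq_sym. Qed.
Lemma Rsum0 : Rsum (fun _ : T => 0) = 0.
Proof. by rewrite /Rsum big1. Qed.
Lemma Rsum_if (c : bool) f : Rsum (fun t => if c then f t else 0) = if c then Rsum f else 0.
Proof. by case: c => //; rewrite Rsum0. Qed.
End RH.

Lemma Rsum_swap (T U : finType) (F : T -> U -> R) :
  Rsum (fun t => Rsum (fun u => F t u)) = Rsum (fun u => Rsum (fun t => F t u)).
Proof. by rewrite /Rsum exchange_big. Qed.

Lemma Rsum_pair (T U : finType) (F : T * U -> R) :
  Rsum F = Rsum (fun t => Rsum (fun u => F (t, u))).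
Proof. by rewrite /Rsum pair_big; apply: eq_bigr => -[]. Qed.

Lemma INR_exp2 k : INR (expn 2 k) = 2 ^ k.
Proof.
elim: k => [|k IH]; first by rewrite expn0.
by rewrite expnS -multE mult_INR IH /=.
Qed.

Lemma card_cV k : INR #|'cV[F2]_k| = 2 ^ k.
Proof. by rewrite card_mx card_Fp // muln1 INR_exp2. Qed.
Lemma col1_eq k (M : 'cV[F2]_(1 + k)) (b : F2) (v : 'cV[F2]_k) :
  (M == col_mx (const_mx b) v) = (M ord0 ord0 == b) && (dsubmx M == v).
Proof.
rewrite -{1}[M]vsubmxK; apply/eqP/andP.
- move=> /eq_col_mx [H1 H2]; split; last by rewrite H2.
  have -> : M ord0 ord0 = usubmx M ord0 ord0 by rewrite mxE; congr (M _ _); apply: val_inj.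
  by rewrite H1 mxE eqxx.
- move=> [/eqP H1 /eqP H2]; rewrite H2; congr col_mx.
  apply/matrixP => i j; rewrite !ord1 !mxE -H1; congr (M _ _); by apply: val_inj.
Qed.

Lemma Rsum_cV1 k (F : 'cV[F2]_(1 + k) -> R) :
  Rsum F = Rsum (fun b : F2 => Rsum (fun v : 'cV[F2]_k => F (col_mx (const_mx b) v))).
Proof.
rewrite /Rsum pair_big /=.
pose h (p : F2 * 'cV[F2]_k) : 'cV[F2]_(1 + k) := col_mx (const_mx p.1) p.2.
pose g (v : 'cV[F2]_(1 + k)) : F2 * 'cV[F2]_k := (v ord0 ord0, dsubmx v).
have hK : cancel h g.
  move=> [b v]; rewrite /g /h /=; congr pair; last by rewrite col_mxKd.
  have -> : (col_mx (const_mx b) v : 'cV[F2]_(1+k)) ord0 ord0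
     = usubmx (col_mx (const_mx b) v : 'cV[F2]_(1+k)) ord0 ord0.
    by rewrite [RHS]mxE; congr (_ _ _); apply: val_inj.
  by rewrite col_mxKu mxE.
have gK : cancel g h.
  move=> v; apply/eqP; rewrite /h /g /= eq_sym col1_eq; by rewrite !eqxx.
rewrite (reindex h); last by exists g => x _; [apply: hK|apply: gK].
by apply: eq_bigr => -[].
Qed.

Section Hybrid.
Variables (Om S : finType).

Definition cb (a b : F2) : R := (if a == b then 1 else 0) - / 2.

Definition bias k (f : Om -> 'cV[F2]_k) (st : 'I_k -> Om -> S) (w : Om -> R) (j : 'I_k) :=
  Rsum (fun b : F2 => Rsum (fun s : S => Rabs (Rsum (fun om =>
     if st j om == s then w om * cb (f om j ord0) b else 0)))).
Arguments bias {k}.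

Lemma split_const (g : Om -> F2) (P : Om -> bool) (X : Om -> R) :
  (forall o o', P o -> P o' -> g o = g o') ->
  Rsum (fun b : F2 => Rabs (Rsum (fun o => if P o then (if g o == b then X o else 0) else 0)))
  = Rabs (Rsum (fun o => if P o then X o else 0)).
Proof.
move=> Hg; case: (pickP P) => [o0 Ho0 | none].
- rewrite -(Rsum_pred1' _ (g o0) (fun _ => Rabs (Rsum (fun o => if P o then X o else 0)))).
  apply: Rsum_ext => b.
  have -> : Rsum (fun o => if P o then (if g o == b then X o else 0) else 0)
          = Rsum (fun o => if g o0 == b then (if P o then X o else 0) else 0).
    apply: Rsum_ext => o; case Po: (P o) => /=; [by rewrite (Hg o o0 Po Ho0) | by case: ifP].
  rewrite (Rsum_if _ (g o0 == b) (fun o => if P o then X o else 0)); case: (g o0 == b) => //; by rewrite Rabs_R0.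
- have E : forall (Y : Om -> R), Rsum (fun o => if P o then Y o else 0) = 0.
    move=> Y; transitivity (Rsum (fun _ : Om => 0)); last exact: Rsum0.
    by apply: Rsum_ext => o; rewrite none.
  rewrite E Rabs_R0; transitivity (Rsum (fun _ : F2 => 0)); last exact: Rsum0.
  by apply: Rsum_ext => b; rewrite E Rabs_R0.
Qed.

Lemma hybrid k : forall (f : Om -> 'cV[F2]_k) (st : 'I_k -> Om -> S) (w : Om -> R),
  (forall o, 0 <= w o) ->
  (forall (i j : 'I_k), ltn i j -> forall o o', st j o = st j o' -> f o i ord0 = f o' i ord0) ->
  Rsum (fun v => Rabs (Rsum (fun o => if f o == v then w o else 0) - Rsum w * (/2)^k))
  <= Rsum (fun j => bias f st w j).
Proof.
elim: k => [|k IH] f st w Hw Hdet.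
  have -> : Rsum (fun j : 'I_0 => bias f st w j) = 0 by rewrite /Rsum big_ord0.
  apply: (Rle_trans _ (Rsum (fun _ : 'cV[F2]_0 => 0))); last by rewrite Rsum0; lra.
  apply: Rsum_le => v.
  have -> : Rsum (fun o => if f o == v then w o else 0) = Rsum w.
    by apply: Rsum_ext => o; rewrite (flatmx0 (f o)) (flatmx0 v) eqxx.
  rewrite /= Rmult_1_r Rminus_diag Rabs_R0; lra.
pose f0 o := f o ord0 ord0.
pose f' o : 'cV[F2]_k := dsubmx (f o : 'cV[F2]_(1 + k)).
pose st' (j : 'I_k) o := st (lift ord0 j) o.
pose wb (b : F2) o := if f0 o == b then w o else 0.
have Hwb : forall b o, 0 <= wb b o by move=> b o; rewrite /wb; case: ifP => _ //; lra.
have f'E : forall o (j : 'I_k), f' o j ord0 = f o (lift ord0 j) ord0.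
  by move=> o j; rewrite mxE; congr (f o _ _); apply: val_inj.
have Hdet' : forall (i j : 'I_k), ltn i j -> forall o o', st' j o = st' j o' -> f' o i ord0 = f' o' i ord0.
  move=> i j Hij o o' Hs; rewrite !f'E; apply: (Hdet _ _ _ o o' Hs).
  by rewrite /= /bump /= !add1n ltnS.
have IHb := fun b => IH f' st' (wb b) (Hwb b) Hdet'.
rewrite (Rsum_cV1 k (fun v => Rabs (Rsum (fun o => if f o == v then w o else 0) - Rsum w * (/ 2) ^ k.+1))).
have Db : forall b v, Rsum (fun o => if (f o : 'cV[F2]_(1+k)) == col_mx (const_mx b : 'cV[F2]_1) v then w o else 0)
                   = Rsum (fun o => if f' o == v then wb b o else 0).
  move=> b v; apply: Rsum_ext => o; rewrite (col1_eq k (f o : 'cV[F2]_(1 + k))) /wb /f0 /f'.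
  by case: (f o ord0 ord0 == b); case: (_ == v).
have step1 : forall b, Rsum (fun v => Rabs (Rsum (fun o => if (f o : 'cV[F2]_(1+k)) == col_mx (const_mx b : 'cV[F2]_1) v then w o else 0)
                  - Rsum w * (/ 2) ^ k.+1))
    <= Rsum (fun v => Rabs (Rsum (fun o => if f' o == v then wb b o else 0) - Rsum (wb b) * (/2)^k))
       + Rabs (Rsum (fun o => w o * cb (f0 o) b)).
  move=> b.
  have -> : Rabs (Rsum (fun o => w o * cb (f0 o) b))
     = Rsum (fun v : 'cV[F2]_k => Rabs (Rsum (wb b) * (/2)^k - Rsum w * (/2)^k.+1)).
    rewrite Rsum_const card_cV.
    have -> : Rsum (wb b) * (/ 2) ^ k - Rsum w * (/ 2) ^ k.+1
        = (/2)^k * Rsum (fun o => w o * cb (f0 o) b).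
      have E1 : Rsum (fun o => w o * cb (f0 o) b) = Rsum (wb b) + (- /2) * Rsum w.
        rewrite -Rsum_scal -Rsum_add; apply: Rsum_ext => o; rewrite /wb /cb; case: ifP => _; ring.
      rewrite E1 /=; ring.
    rewrite Rabs_mult (Rabs_pos_eq ((/2)^k)); last by apply: pow_le; lra.
    rewrite -Rmult_assoc -Rpow_mult_distr Rinv_r; [rewrite pow1; ring | lra].
  rewrite -Rsum_add; apply: Rsum_le => v; rewrite Db.
  apply: Rle_trans (Rabs_triang _ _); right; congr Rabs; lra.
have step4 : forall j : 'I_k, Rsum (fun b => bias f' st' (wb b) j) <= bias f st w (lift ord0 j).
  move=> j; rewrite /bias Rsum_swap; apply: Rsum_le => b'.
  rewrite Rsum_swap; apply: Rsum_le => s; right.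
  pose P o := st (lift ord0 j) o == s.
  pose X o := w o * cb (f o (lift ord0 j) ord0) b'.
  rewrite -(split_const f0 P X).
    apply: Rsum_ext => b; congr Rabs; apply: Rsum_ext => o.
    rewrite /st' /P /X f'E /wb /=; case: ifP => _ //; case: ifP => _ //; ring.
  move=> o o' /eqP Ho /eqP Ho'; apply: (Hdet ord0 (lift ord0 j)) => //.
  by rewrite Ho Ho'.
have step5 : Rsum (fun b => Rabs (Rsum (fun o => w o * cb (f0 o) b))) <= bias f st w ord0.
  rewrite /bias; apply: Rsum_le => b.
  apply: Rle_trans (Rsum_abs _ _); right; congr Rabs.
  rewrite Rsum_swap; apply: Rsum_ext => o.
  by rewrite (Rsum_pred1' _ (st ord0 o) (fun _ => w o * cb (f o ord0 ord0) b)).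
apply: Rle_trans (Rsum_le _ _ _ step1) _.
rewrite Rsum_add.
have -> : Rsum (fun j => bias f st w j) = bias f st w ord0 + Rsum (fun j : 'I_k => bias f st w (lift ord0 j)).
  by rewrite /Rsum big_ord_recl.
rewrite Rplus_comm; apply: Rplus_le_compat; first exact: step5.
apply: Rle_trans (Rsum_le _ _ _ IHb) _.
rewrite Rsum_swap; apply: Rsum_le => j; exact: step4.
Qed.
End Hybrid.

Definition bitv n (r : 'rV[F2]_n) (y : 'cV[F2]_n) : F2 := (mulmx r y) ord0 ord0.
Arguments bitv {n}.
Definition chiF (a : F2) : R := if a == GRing.zero then 1 else -1.
Definition chi n (r : 'rV[F2]_n) (y : 'cV[F2]_n) : R := chiF (bitv r y).
Arguments chi {n}.

Section Mx.
Local Close Scope R_scope.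
Local Open Scope ring_scope.
Import GRing.Theory.
Variable n : nat.
Lemma bitvB (r r' : 'rV[F2]_n) y : bitv (r - r') y = bitv r y - bitv r' y.
Proof. by rewrite /bitv mulmxBl !mxE. Qed.
Lemma bitvD (r : 'rV[F2]_n) y y' : bitv r (y + y') = bitv r y + bitv r y'.
Proof. by rewrite /bitv mulmxDr !mxE. Qed.
Lemma bitv0 (y : 'cV[F2]_n) : bitv 0 y = 0.
Proof. by rewrite /bitv mul0mx mxE. Qed.
Lemma bitv_delta (r : 'rV[F2]_n) l : bitv r (delta_mx l ord0) = r ord0 l.
Proof.
rewrite /bitv mxE (bigD1 l) //= mxE !eqxx mulr1 big1 ?addr0 // => i /negbTE Hi.
by rewrite mxE Hi mulr0.
Qed.
End Mx.
Lemma F2_sub_chi (a b : F2) : chiF (GRing.add a (GRing.opp b)) = chiF a * chiF b.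
Proof. rewrite /chiF; case: (F2cases a) => ->; case: (F2cases b) => -> /=; rewrite /=; lra. Qed.
Lemma F2_add1_chi (a : F2) : chiF (GRing.add a (GRing.one _)) = - chiF a.
Proof. rewrite /chiF; case: (F2cases a) => -> /=; rewrite /=; lra. Qed.
Lemma F2_ne0 (a : F2) : a != GRing.zero -> a = GRing.one _.
Proof. by case: (F2cases a) => ->. Qed.

Lemma Rsum_mul (T U : finType) (f : T -> R) (g : U -> R) :
  Rsum f * Rsum g = Rsum (fun t => Rsum (fun u => f t * g u)).
Proof. rewrite /Rsum big_distrl; apply: eq_bigr => t _; by rewrite big_distrr. Qed.

Lemma chi_sum n (r : 'rV[F2]_n) :
  Rsum (fun y => chi r y) = if r == GRing.zero then 2 ^ n else 0.
Proof.
case: eqP => [->|Hr].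
  rewrite (Rsum_ext _ _ (fun _ => 1)); last by move=> y; rewrite /chi bitv0 /chiF eqxx.
  by rewrite Rsum_const card_cV Rmult_1_r.
have : ~~ [forall l, r ord0 l == GRing.zero].
  apply/negP => /forallP H; apply: Hr; apply/matrixP => i j; rewrite ord1 !mxE; apply/eqP; exact: (H j).
rewrite negb_forall => /existsP [l Hl].
pose d : 'cV[F2]_n := delta_mx l ord0.
have E : Rsum (fun y => chi r y) = Rsum (fun y => chi r (GRing.add y d)).
  by rewrite /Rsum (reindex_inj (@GRing.addIr _ d)).
have E2 : Rsum (fun y => chi r (GRing.add y d)) = - Rsum (fun y => chi r y).
  have -> : forall x, - x = (-1) * x by move=> x; ring.
  rewrite -Rsum_scal; apply: Rsum_ext => y.
  by rewrite /chi bitvD /d bitv_delta (F2_ne0 _ Hl) F2_add1_chi; ring.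
lra.
Qed.

Lemma parseval n (N : 'rV[F2]_n -> R) :
  Rsum (fun y => (Rsum (fun r => N r * chi r y)) ^ 2) = 2 ^ n * Rsum (fun r => N r ^ 2).
Proof.
rewrite (Rsum_ext _ _ (fun y => Rsum (fun r => Rsum (fun r' => N r * N r' * chi (GRing.add r (GRing.opp r')) y)))); last first.
  move=> y; rewrite /= Rmult_1_r Rsum_mul; apply: Rsum_ext => r; apply: Rsum_ext => r'.
  rewrite /chi bitvB F2_sub_chi; ring.
rewrite Rsum_swap -Rsum_scal; apply: Rsum_ext => r.
rewrite Rsum_swap.
rewrite (Rsum_ext _ _ (fun r' => if r == r' then 2 ^ n * N r ^ 2 else 0)).
  by rewrite Rsum_pred1'.
move=> r'; rewrite Rsum_scal chi_sum -[r == r']GRing.subr_eq0.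
case: eqP => [/eqP|_]; last by ring.
rewrite GRing.subr_eq0 => /eqP <-; ring.
Qed.

Lemma CS (T : finType) (p a : T -> R) : (forall t, 0 <= p t) ->
  (Rsum (fun t => p t * a t)) ^ 2 <= Rsum p * Rsum (fun t => p t * a t ^ 2).
Proof.
move=> Hp.
have H : 0 <= Rsum (fun t => Rsum (fun u => p t * p u * (a t - a u) ^ 2)).
  apply: Rsum_ge0 => t; apply: Rsum_ge0 => u.
  apply: Rmult_le_pos; [by apply: Rmult_le_pos | by apply: pow2_ge_0].
rewrite (Rsum_ext _ _ (fun t => Rsum (fun u => p t * (p u * a u ^ 2))
    + Rsum (fun u => (p t * a t ^ 2) * p u) + (-2) * Rsum (fun u => (p t * a t) * (p u * a u)))) in H;
  last by move=> t; rewrite -Rsum_scal -!Rsum_add; apply: Rsum_ext => u; ring.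
rewrite !Rsum_add Rsum_scal -!Rsum_mul in H.
move: H; rewrite /= => H; nra.
Qed.

Lemma fourier_bound n (p : 'cV[F2]_n -> R) (N : 'rV[F2]_n -> R) a c :
  (forall y, 0 <= p y) -> Rsum p = 1 -> (forall y, p y <= a) ->
  (forall r, 0 <= N r) -> (forall r, N r <= c) ->
  (Rsum (fun y => p y * Rabs (Rsum (fun r => N r * chi r y)))) ^ 2
    <= a * (2 ^ n * (c * Rsum N)).
Proof.
move=> Hp Hp1 Hpa HN HNc.
have Ha : 0 <= a.
  apply: (Rle_trans _ (p (const_mx GRing.zero))); [exact: Hp | exact: Hpa].
apply: Rle_trans (CS _ p (fun y => Rabs (Rsum (fun r => N r * chi r y))) Hp) _; rewrite Hp1 Rmult_1_l.
set g := fun y => Rsum (fun r => N r * chi r y).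
apply: (Rle_trans _ (Rsum (fun y => a * g y ^ 2))).
  apply: Rsum_le => y; rewrite pow2_abs; apply: Rmult_le_compat_r; [apply: pow2_ge_0 | exact: Hpa].
rewrite Rsum_scal /g parseval; apply: Rmult_le_compat_l => //.
apply: Rmult_le_compat_l; first by apply: pow_le; lra.
rewrite -Rsum_scal; apply: Rsum_le => r; rewrite /= Rmult_1_r.
apply: Rmult_le_compat_r => //.
Qed.

Lemma Rsum_ge_term (T : finType) (f : T -> R) (a : T) :
  (forall t, 0 <= f t) -> f a <= Rsum f.
Proof.
move=> H; rewrite /Rsum (bigD1 a) //=.
have : 0 <= \big[Rplus/0]_(i | i != a) f i by apply: big_ind => //; [lra | move=> *; lra].
lra.
Qed.

Lemma Rmaxf_ge (T : finType) (f : T -> R) (t : T) : f t <= Rmaxf f.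
Proof.
rewrite /Rmaxf.
have : forall s : seq T, t \in s -> f t <= \big[Rmax/0]_(i <- s) f i.
  elim=> [//|x s IH]; rewrite in_cons big_cons => /orP [/eqP ->|Hs].
    exact: Rmax_l.
  apply: Rle_trans (IH Hs) _; exact: Rmax_r.
by apply; rewrite mem_index_enum.
Qed.

Lemma ln2_pos : 0 < ln 2.
Proof. rewrite -ln_1; apply: ln_increasing; lra. Qed.

Lemma Hinf_bound (T : finType) (p : T -> R) beta :
  (exists t, 0 < p t) -> beta <= H_inf p -> forall t, p t <= Rpower 2 (- beta).
Proof.
move=> [t0 Ht0] Hb t.
have HM : 0 < Rmaxf p by apply: Rlt_le_trans Ht0 (Rmaxf_ge _ _ _).
have Hln : ln (Rmaxf p) <= - beta * ln 2.
  move: Hb; rewrite /H_inf /log2 => Hb.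
  have L := ln2_pos.
  have : beta * ln 2 <= - (ln (Rmaxf p) / ln 2) * ln 2 by apply: Rmult_le_compat_r; lra.
  have -> : - (ln (Rmaxf p) / ln 2) * ln 2 = - ln (Rmaxf p) by field; lra.
  lra.
apply: Rle_trans (Rmaxf_ge _ _ t) _.
rewrite -(exp_ln _ HM) /Rpower.
case: (Rle_lt_or_eq_dec _ _ Hln) => [H|->]; last lra.
left; exact: exp_increasing.
Qed.

Section Mask.
Local Close Scope R_scope.
Local Open Scope ring_scope.
Import GRing.Theory.
Variables m n : nat.
Definition mask (t : 'I_m) (A : 'M[F2]_(m, n)) : 'M[F2]_(m, n) :=
  \matrix_(i, l) if ltn i t then A i l else 0.

Lemma prefix_mask (t : 'I_m) (B A : 'M[F2]_(m, n)) :
  prefix_eq t B A = (mask t B == mask t A).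
Proof.
apply/forallP/eqP.
- move=> H; apply/matrixP => i l; rewrite !mxE; case: ifP => // Hi.
  by have := H i; rewrite Hi /= => /eqP/rowP/(_ l); rewrite !mxE.
- move=> H j; apply/implyP => Hj; apply/eqP/rowP => l.
  by have := congr1 (fun M : 'M[F2]_(m, n) => M j l) H; rewrite !mxE Hj.
Qed.

Lemma mul_mask (t t' : 'I_m) (A : 'M[F2]_(m, n)) (x : 'cV[F2]_n) :
  ltn t' t -> (A *m x) t' ord0 = (mask t A *m x) t' ord0.
Proof. by move=> H; rewrite !mxE; apply: eq_bigr => l _; rewrite /mask mxE H. Qed.

Lemma mul_row_bit (t : 'I_m) (A : 'M[F2]_(m, n)) (x : 'cV[F2]_n) :
  (A *m x) t ord0 = bitv (row t A) x.
Proof. by rewrite /bitv -row_mul [RHS]mxE. Qed.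
End Mask.
Arguments mask {m n}.

Lemma enum_val_mono m (T : {set 'I_m}) (i j : 'I_#|T|) :
  ltn i j -> ltn (enum_val i) (enum_val j).
Proof.
move=> Hij.
have x0 : 'I_m := enum_val i.
rewrite (enum_val_nth x0 i) (enum_val_nth x0 j).
have Htr : transitive (relpre (@nat_of_ord m) ltn).
  by move=> a b c /= H1 H2; apply: ltn_trans H1 H2.
have Hs : sorted (relpre val ltn) (enum T).
  rewrite /enum_mem; apply: sorted_filter => //.
  rewrite -enumT -sorted_map val_enum_ord; exact: iota_ltn_sorted.
apply: (sorted_ltn_nth Htr x0 Hs) => //; rewrite inE -cardE ?ltn_ord //.
Qed.

Lemma cb_chi (a b : F2) : cb a b = / 2 * (chiF b * chiF a).
Proof. rewrite /cb /chiF; case: (F2cases a) => ->; case: (F2cases b) => -> /=; lra. Qed.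

Lemma distr_pos (T : finType) (p : T -> R) : Rsum p = 1 -> exists t, 0 < p t.
Proof.
move=> H; apply: NNPP => Hn.
have : Rsum p <= Rsum (fun _ : T => 0).
  apply: Rsum_le => t; apply: Rnot_lt_le => Ht; apply: Hn; by exists t.
rewrite Rsum0; lra.
Qed.

Lemma class_bound m n (pA : 'M[F2]_(m, n) -> R) (px : 'cV[F2]_n -> R) (t : 'I_m)
   (P : 'M[F2]_(m, n)) (a n' E : R) :
  (forall A, 0 <= pA A) -> (forall y, 0 <= px y) -> Rsum px = 1 -> (forall y, px y <= a) ->
  (forall A, 0 < pA A -> mask t A = P -> n' <= H_inf (cond_row pA A t)) ->
  0 <= E -> a * (2 ^ n * Rpower 2 (- n')) <= E ^ 2 ->
  Rsum (fun y => px y * Rabs (Rsum (fun A => if mask t A == P then pA A * chi (row t A) y else 0)))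
  <= E * Rsum (fun A => if mask t A == P then pA A else 0).
Proof.
move=> HpA Hpx Hpx1 Hpxa Hblk HE Hexp.
set Z := Rsum (fun A => if mask t A == P then pA A else 0).
have HZ : 0 <= Z by apply: Rsum_ge0 => A; case: ifP => _ //; lra.
pose N r := Rsum (fun A => if (mask t A == P) && (row t A == r) then pA A else 0).
have HN : forall r, 0 <= N r by move=> r; apply: Rsum_ge0 => A; case: ifP => _ //; lra.
have gE : forall y, Rsum (fun A => if mask t A == P then pA A * chi (row t A) y else 0)
                  = Rsum (fun r => N r * chi r y).
  move=> y; rewrite (Rsum_ext _ _ (fun r => Rsum (fun A => if row t A == r then
        (if mask t A == P then pA A * chi r y else 0) else 0))); last first.
    move=> r; rewrite Rmult_comm -Rsum_scal; apply: Rsum_ext => A.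
    by case: (mask t A == P); case: (row t A == r) => /=; ring.
  rewrite Rsum_swap; apply: Rsum_ext => A.
  by rewrite (Rsum_pred1' _ (row t A) (fun r => if mask t A == P then pA A * chi r y else 0)).
have SN : Rsum N = Z.
  rewrite /N Rsum_swap; apply: Rsum_ext => A.
  rewrite (Rsum_ext _ _ (fun r => if row t A == r then (if mask t A == P then pA A else 0) else 0)).
    by rewrite (Rsum_pred1' _ (row t A) (fun _ => if mask t A == P then pA A else 0)).
  by move=> r; case: (mask t A == P); case: (row t A == r).
case: (classic (exists A0, mask t A0 = P /\ 0 < pA A0)) => [[A0 [HA0 HpA0]] | Hno]; last first.
  have H0 : forall A, mask t A = P -> pA A = 0.
    move=> A HA; have := HpA A; case=> // Hlt; exfalso; apply: Hno; by exists A.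
  have -> : Z = 0.
    rewrite /Z; transitivity (Rsum (fun _ : 'M[F2]_(m, n) => 0)); last exact: Rsum0.
    apply: Rsum_ext => A; case: eqP => // HA; exact: H0.
  rewrite Rmult_0_r; right.
  transitivity (Rsum (fun _ : 'cV[F2]_n => 0)); last exact: Rsum0.
  apply: Rsum_ext => y.
  have -> : Rsum (fun A => if mask t A == P then pA A * chi (row t A) y else 0) = 0.
    transitivity (Rsum (fun _ : 'M[F2]_(m, n) => 0)); last exact: Rsum0.
    by apply: Rsum_ext => A; case: eqP => // HA; rewrite H0 // Rmult_0_l.
  by rewrite Rabs_R0 Rmult_0_r.
have HZpos : 0 < Z.
  apply: Rlt_le_trans HpA0 _.
  have -> : pA A0 = (fun A => if mask t A == P then pA A else 0) A0 by rewrite /= HA0 eqxx.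
  apply: Rsum_ge_term => A; case: ifP => _ //; lra.
have condE : forall r, cond_row pA A0 t r = N r / Z.
  move=> r; rewrite /cond_row /N /Z; congr Rdiv; apply: Rsum_ext => B; by rewrite prefix_mask HA0.
have Hcpos : exists r, 0 < cond_row pA A0 t r.
  exists (row t A0); rewrite condE; apply: Rdiv_lt_0_compat => //.
  apply: Rlt_le_trans HpA0 _.
  have -> : pA A0 = (fun A => if (mask t A == P) && (row t A == row t A0) then pA A else 0) A0
    by rewrite /= HA0 !eqxx.
  apply: Rsum_ge_term => A; case: ifP => _ //; lra.
have HNc : forall r, N r <= Z * Rpower 2 (- n').
  move=> r; have := Hinf_bound _ _ _ Hcpos (Hblk _ HpA0 HA0) r; rewrite condE => H.
  have -> : N r = Z * (N r / Z) by field; lra.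
  apply: Rmult_le_compat_l => //; lra.
have FB := fourier_bound n px N a (Z * Rpower 2 (- n')) Hpx Hpx1 Hpxa HN HNc.
rewrite SN in FB.
rewrite (Rsum_ext _ _ (fun y => px y * Rabs (Rsum (fun r => N r * chi r y)))); last by move=> y; rewrite gE.
set X := Rsum _ in FB *.
have HX : 0 <= X by apply: Rsum_ge0 => y; apply: Rmult_le_pos => //; apply: Rabs_pos.
have Ha : 0 <= a by apply: (Rle_trans _ (px (const_mx GRing.zero))); [exact: Hpx | exact: Hpxa].
have HR : 0 < Rpower 2 (- n') by apply: exp_pos.
have H2 : 0 < 2 ^ n by apply: pow_lt; lra.
have : X ^ 2 <= (E * Z) ^ 2.
  apply: Rle_trans FB _.
  have -> : a * (2 ^ n * (Z * Rpower 2 (- n') * Z)) = (a * (2 ^ n * Rpower 2 (- n'))) * (Z * Z) by ring.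
  have -> : (E * Z) ^ 2 = E ^ 2 * (Z * Z) by ring.
  apply: Rmult_le_compat_r => //; nra.
move=> H; have HEZ : 0 <= E * Z by nra.
nra.
Qed.
Arguments enum_val_mono {m T i j}.

Theorem lemmaG9 (m n : nat) (eta zeta Delta alpha : R)
  (pA : 'M[F2]_(m, n) -> R) (px : 'cV[F2]_n -> R) :
  ltn O m -> leq m n ->
  0 <= eta <= 1 -> 0 < Delta -> 2 * Delta + zeta <= alpha ->
  is_distr pA -> block_source pA eta (INR n * (1 - zeta)) ->
  is_distr px -> alpha * INR n <= H_inf px ->
  exists T : {set 'I_m},
    (1 - eta) * INR m <= INR #|T| /\
    stat_dist (dist_AxT pA px T) (@uniform _)
      <= INR #|T| * Rpower 2 (- (Delta * INR n)).
Proof.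
move=> Hm Hmn Heta HD Halpha [HpA HpA1] [S [HS Hsrc]] [Hpx Hpx1] Hxent.
exists (~: S); split.
  have := cardsC S; rewrite card_ord => Hc.
  have : INR #|S| + INR #|~: S| = INR m by rewrite -plus_INR plusE Hc.
  nra.
set T := ~: S.
set k := #|T|.
set E := Rpower 2 (- (Delta * INR n)).
have HE : 0 <= E by left; apply: exp_pos.
pose a := Rpower 2 (- (alpha * INR n)).
have Hpxa : forall y, px y <= a.
  apply: Hinf_bound => //; exact: distr_pos.
have Hexp : a * (2 ^ n * Rpower 2 (- (INR n * (1 - zeta)))) <= E ^ 2.
  rewrite -(Rpower_pow n 2); last lra.
  rewrite /a /E /= Rmult_1_r -!Rpower_plus; apply: Rle_Rpower; first lra.
  have := pos_INR n; nra.
pose Om := ('M[F2]_(m, n) * 'cV[F2]_n)%type.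
pose w (o : Om) := pA o.1 * px o.2.
pose f (o : Om) : 'cV[F2]_k := proj_T T (mulmx o.1 o.2).
pose st (j : 'I_k) (o : Om) : Om := (mask (enum_val j) o.1, o.2).
have Hw : forall o, 0 <= w o by move=> o; apply: Rmult_le_pos.
have Hdet : forall (i j : 'I_k), ltn i j -> forall o o', st j o = st j o' -> f o i ord0 = f o' i ord0.
  move=> i j Hij [A x] [A' x'] [HA Hx].
  have E1 : forall B y, f (B, y) i ord0 = (mulmx B y) (enum_val i) ord0.
    by move=> B y; rewrite /f /proj_T mxE.
  have Hlt := enum_val_mono Hij.
  by rewrite !E1 /= -Hx (mul_mask _ _ _ _ _ _ Hlt) HA -(mul_mask _ _ _ _ _ _ Hlt).
have HY := hybrid Om Om k f st w Hw Hdet.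
have Hw1 : Rsum w = 1.
  rewrite Rsum_pair (Rsum_ext _ _ (fun A => pA A * Rsum px)); first by rewrite Hpx1 -[RHS]HpA1; apply: Rsum_ext => A; ring.
  by move=> A; rewrite -Rsum_scal.
have Hbias : forall j, @bias Om Om k f st w j <= E.
  move=> j.
  set t := enum_val j.
  have Ht : t \notin S by have := enum_valP j; rewrite /T inE.
  pose g P y := Rsum (fun A => if mask t A == P then pA A * chi (row t A) y else 0).
  have inner : forall b P y, Rsum (fun o : Om => if st j o == (P, y) then w o * cb (f o j ord0) b else 0)
       = (/2 * chiF b) * (px y * g P y).
    move=> b P y; rewrite Rsum_pair /g -!Rsum_scal; apply: Rsum_ext => A.
    rewrite (Rsum_ext _ _ (fun x => if x == y then
         (if mask t A == P then pA A * px x * cb (f (A, x) j ord0) b else 0) else 0)); last first.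
      move=> x; rewrite /st /w xpair_eqE /=.
      by case: (mask (enum_val j) A == P); case: (x == y).
    rewrite Rsum_pred1; case: ifP => _; last by ring.
    rewrite /f /proj_T mxE mul_row_bit cb_chi /chi /= -/t; ring.
  have Hchi : forall b, Rabs (/2 * chiF b) = /2.
    move=> b; rewrite /chiF; case: ifP => _; [rewrite Rabs_pos_eq; lra | rewrite Rabs_left; lra].
  rewrite /bias (Rsum_ext _ _ (fun b => Rsum (fun P => Rsum (fun y => /2 * (px y * Rabs (g P y)))))); last first.
    move=> b; rewrite Rsum_pair; apply: Rsum_ext => P; apply: Rsum_ext => y.
    rewrite inner Rabs_mult Hchi Rabs_mult (Rabs_pos_eq (px y)) //.
  rewrite Rsum_const card_Fp //.
  rewrite (Rsum_ext _ _ (fun P => /2 * Rsum (fun y => px y * Rabs (g P y)))); last by move=> P; rewrite Rsum_scal.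
  rewrite Rsum_scal.
  apply: (Rle_trans _ (INR 2 * (/2 * Rsum (fun P => E * Rsum (fun A => if mask t A == P then pA A else 0))))).
    apply: Rmult_le_compat_l; first by apply: pos_INR.
    apply: Rmult_le_compat_l; first lra.
    apply: Rsum_le => P; apply: class_bound => //; try exact: Hexp.
    by move=> A HA _; apply: Hsrc.
  rewrite (Rsum_scal _ E (fun P => Rsum (fun A => if mask t A == P then pA A else 0))) Rsum_swap.
  rewrite (Rsum_ext _ _ pA); first by rewrite HpA1 /=; lra.
  move=> A; exact: (Rsum_pred1' _ (mask t A) (fun _ => pA A)).
rewrite /stat_dist.
apply: (Rle_trans _ (/ 2 * (INR k * E))); last first.
  have := pos_INR k; nra.
apply: Rmult_le_compat_l; first lra.
apply: (Rle_trans _ _ _ _ (Rle_trans _ _ _ HY _)); last first.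
  have -> : INR k * E = Rsum (fun _ : 'I_k => E) by rewrite Rsum_const card_ord.
  exact: Rsum_le.
right; apply: Rsum_ext => v; congr Rabs.
rewrite Hw1 Rmult_1_l /uniform card_cV -Rinv_pow; last lra.
congr Rminus.
rewrite /dist_AxT Rsum_pair; apply: Rsum_ext => A; apply: Rsum_ext => x //.
Qed.
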